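(* For every natural number $N$ and every prime number $p$, there exists an integer $m \ge 1$ such that for every $l \in \mathbb{N}$, $$P_{T(2,2lm+1)}(a,N) \equiv a^{2lm} \pmod p \quad\text{and}\quad P_{T(2,-2lm-1)}(a,N) \equiv a^{-2lm} \pmod p.$$
   Context: $P_K(a,z)$ denotes the HOMFLY polynomial of a link $K$, normalised so that the trivial knot has $P=1$ and satisfying $a^{-1} P_{\widehat{\beta \sigma_i^2}} - a P_{\widehat{\beta}} = z P_{\widehat{\beta\sigma_i}}$ for all braids $\beta\in B_n$ and generators $\sigma_i$, where the hat denotes braid closure. For an integer $n$, $T(2,n)$ denotes the torus link obtained as the closure of the braid $\sigma_1^n \in B_2$; for $n$ odd it is a knot, and $T(2,-n)$ is the mirror image of $T(2,n)$. Congruence modulo $p$ of Laurent polynomials means congruence of all coefficients. *)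

(* Defs.v *)
From mathcomp Require Import all_boot all_algebra.
Set Implicit Arguments. Unset Strict Implicit. Unset Printing Implicit Defensive.
Import GRing.Theory Num.Theory.
Local Open Scope ring_scope.

(* A Laurent polynomial in two variables a, z with integer coefficients is
   represented by its coefficient function: [f i j] is the coefficient of
   a^i z^j (i, j : int). *)
Definition lpoly := int -> int -> int.

Definition lp_one : lpoly := fun i j => ((i == 0) && (j == 0))%:R.

(* HOMFLY polynomials of the torus links T(2,n), n : int, i.e. of the
   closures of sigma_1^n in B_2.  [P] is such a family iff
   - T(2,1) and T(2,-1) (closures of sigma_1^{+-1}) are trivial knots: P = 1;
   - the skein relation a^{-1} P_{T(2,n+2)} - a P_{T(2,n)} = z P_{T(2,n+1)}
     holds for every n (beta = sigma_1^n, i = 1), written coefficientwise: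
     coefficient of a^i z^j in a^{-1} Q is Q (i+1) j, in a Q is Q (i-1) j,
     in z Q is Q i (j-1). *)
Definition homfly_T2 (P : int -> lpoly) : Prop :=
  P 1 = lp_one /\ P (-1) = lp_one /\
  forall (n i j : int), P (n + 2) (i + 1) j - P n (i - 1) j = P (n + 1) i (j - 1).

(* [lp_eval_z f N g]: f is a polynomial in z (no negative powers of z, bounded
   degree) and g is the coefficient function (in the variable a) of the
   specialization f(a, N), i.e. g i = sum_j f i j * N^j. *)
Definition lp_eval_z (f : lpoly) (N : int) (g : int -> int) : Prop :=
  exists d : nat,
    (forall i j, f i j != 0 -> 0 <= j <= d%:Z) /\
    (forall i, g i = \sum_(k < d.+1) f i k%:Z * N ^+ k).

(* Existence witness: explicit solution of the skein recursion. *)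
Definition lp_shift (di dj : int) (f : lpoly) : lpoly := fun i j => f (i - di) (j - dj).
Definition lp_add (f g : lpoly) : lpoly := fun i j => f i j + g i j.
Definition lp_sub (f g : lpoly) : lpoly := fun i j => f i j - g i j.
(* P_{T(2,0)} = (a^{-1} - a) z^{-1} *)
Definition lp_P0 : lpoly := lp_sub (lp_shift (-1) (-1) lp_one) (lp_shift 1 (-1) lp_one).

Fixpoint T2fwd (k : nat) : lpoly * lpoly :=
  if k is k'.+1 then
    let (x, y) := T2fwd k' in (y, lp_add (lp_shift 2 0 x) (lp_shift 1 1 y))
  else (lp_P0, lp_one).
Fixpoint T2bwd (k : nat) : lpoly * lpoly :=
  if k is k'.+1 then
    let (x, y) := T2bwd k' in (lp_sub (lp_shift (-2) 0 y) (lp_shift (-1) 1 x), x)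
  else (lp_P0, lp_one).
Definition T2homfly (n : int) : lpoly :=
  match n with Posz k => (T2fwd k).1 | Negz k => (T2bwd k.+1).1 end.

(* Main.v *)
Require Import Defs.
From mathcomp Require Import all_boot all_algebra all_fingroup.
From mathcomp Require Import zify ring lra.
Import GRing.Theory Num.Theory.
Local Open Scope ring_scope.

Definition cz (q : {poly int}) (j : int) : int :=
  match j with Posz n => q`_n | Negz _ => 0 end.

Fixpoint tt_ (n : nat) : {poly int} :=
  match n with
  | 0%N => -1
  | 1%N => 0
  | (S m as k).+1 => ('X^2 + 2%:P) * tt_ k - tt_ m
  end.

Definition tt := locked tt_.
Lemma ttS n : tt n.+2 = ('X^2 + 2%:P) * tt n.+1 - tt n.
Proof. by rewrite /tt; unlock. Qed.
Lemma tt0 : tt 0 = -1. Proof. by rewrite /tt; unlock. Qed.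
Lemma tt1 : tt 1 = 0. Proof. by rewrite /tt; unlock. Qed.

Lemma cz_neg q z : z < 0 -> cz q z = 0.
Proof. by case: z. Qed.

Lemma cz_one j : cz 1 j = (j == 0)%:R.
Proof. by case: j => [[|k]|k] //=; rewrite coef1. Qed.

Lemma cz_rec q r j :
  cz (('X^2 + 2%:P) * q - r) j = 2 * cz q j + cz q (j - 2) - cz r j.
Proof.
case: j => [k|k]; last first.
  have H : Negz k - 2 < 0 by lia.
  rewrite (cz_neg q _ H) /=. lia.
rewrite /= coefB mulrDl coefD coefXnM coefCM.
case: k => [|[|k]] /=; [by rewrite add0r addr0 | by rewrite add0r addr0 |].
have -> : (k.+2 - (0 + 1).+1 = k)%N by lia.
by congr (_ - _); rewrite addrC.
Qed.

Section Skein.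
Variable P : int -> lpoly.
Hypothesis S : forall n i j, P (n+2) (i+1) j - P n (i-1) j = P (n+1) i (j-1).

Lemma Scong n i j n2 i2 i0 n1 j1 : n2 = n+2 -> i2 = i+1 -> i0 = i-1 -> n1 = n+1 -> j1 = j-1 ->
  P n2 i2 j - P n i0 j = P n1 i j1.
Proof. by move=> -> -> -> -> ->. Qed.

Lemma rec_fwd n i j :
  P (n+4) i j = 2 * P (n+2) (i-2) j + P (n+2) (i-2) (j-2) - P n (i-4) j.
Proof.
have h1 := @Scong (n+2) (i-1) j (n+4) i (i-2) (n+3) (j-1) ltac:(ring) ltac:(ring) ltac:(ring) ltac:(ring) ltac:(ring).
have h2 := @Scong (n+1) (i-2) (j-1) (n+3) (i-1) (i-3) (n+2) (j-2) ltac:(ring) ltac:(ring) ltac:(ring) ltac:(ring) ltac:(ring).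
have h3 := @Scong n (i-3) j (n+2) (i-2) (i-4) (n+1) (j-1) ltac:(ring) ltac:(ring) ltac:(ring) ltac:(ring) ltac:(ring).
lia.
Qed.

Lemma rec_bwd n i j :
  P (n-4) i j = 2 * P (n-2) (i+2) j + P (n-2) (i+2) (j-2) - P n (i+4) j.
Proof.
have := rec_fwd (n-4) (i+4) j.
have -> : n - 4 + 4 = n by ring.
have -> : n - 4 + 2 = n - 2 by ring.
have -> : i + 4 - 2 = i + 2 by ring.
have -> : i + 4 - 4 = i by ring.
lia.
Qed.
End Skein.

Lemma cz0 j : cz 0 j = 0.
Proof. by case: j => [k|k] //=; rewrite coef0. Qed.
Lemma czN q j : cz (-q) j = - cz q j.
Proof. by case: j => [k|k] //=; rewrite coefN. Qed.

Lemma czt0 j : cz (tt 0) j = - (j == 0)%:R.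
Proof. rewrite tt0; case: j => [[|k]|k] //=; rewrite coefN coef1 //. Qed.
Lemma czt1 j : cz (tt 1) j = 0.
Proof. rewrite tt1; exact: cz0. Qed.
Lemma czt2 j : cz (tt 2) j = (j == 0)%:R.
Proof. rewrite ttS cz_rec czt0 czt1 mulr0 add0r opprK.
have -> : cz (tt 1) (j - 2) = 0 by exact: czt1.
by rewrite add0r. Qed.

Section Phi.
Variable P : int -> lpoly.
Hypothesis HP : homfly_T2 P.

Lemma phi_fwd (k : nat) i j :
  P (2 * k%:Z - 1) i j = (i == 2 * k%:Z - 2)%:R * cz (tt k.+1) j - (i == 2 * k%:Z)%:R * cz (tt k) j.
Proof.
case: HP => H1 [Hm1 Sk].
suff : forall i j, (P (2 * k%:Z - 1) i j = (i == 2 * k%:Z - 2)%:R * cz (tt k.+1) j - (i == 2 * k%:Z)%:R * cz (tt k) j) /\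
  (P (2 * k.+1%:Z - 1) i j = (i == 2 * k.+1%:Z - 2)%:R * cz (tt k.+2) j - (i == 2 * k.+1%:Z)%:R * cz (tt k.+1) j).
  by move=> /(_ i j) [].
elim: k {i j} => [|k IH] i j.
  split.
    have -> : 2 * (Posz 0) - 1 = -1 by [].
    rewrite Hm1 /lp_one czt0 czt1 mulr0 sub0r mulrN opprK.
    have -> : (i == 2 * 0) = (i == 0) by [].
    by case: (i == 0); case: (j == 0).
  have -> : 2 * (Posz 1) - 1 = 1 by [].
  rewrite H1 /lp_one czt1 czt2 mulr0 subr0.
  have -> : (i == 2 * 1 - 2) = (i == 0) by [].
  by case: (i == 0); case: (j == 0).
split; first by case: (IH i j).
have -> : 2 * k.+2%:Z - 1 = (2 * k%:Z - 1) + 4 by lia.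
rewrite (@rec_fwd P Sk).
have -> : 2 * k%:Z - 1 + 2 = 2 * k.+1%:Z - 1 by lia.
case: (IH (i-2) j) => _ ->.
case: (IH (i-2) (j-2)) => _ ->.
case: (IH (i-4) j) => -> _.
have -> : (i - 2 == 2 * k.+1%:Z - 2) = (i == 2 * k.+2%:Z - 2) by apply/eqP/eqP; lia.
have -> : (i - 2 == 2 * k.+1%:Z) = (i == 2 * k.+2%:Z) by apply/eqP/eqP; lia.
have -> : (i - 4 == 2 * k%:Z - 2) = (i == 2 * k.+2%:Z - 2) by apply/eqP/eqP; lia.
have -> : (i - 4 == 2 * k%:Z) = (i == 2 * k.+2%:Z) by apply/eqP/eqP; lia.
rewrite (ttS k.+1) cz_rec.
rewrite (_ : cz (tt k.+2) j = 2 * cz (tt k.+1) j + cz (tt k.+1) (j-2) - cz (tt k) j); last by rewrite ttS cz_rec.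
ring.
Qed.

Lemma phi_bwd (k : nat) i j :
  P (1 - 2 * k%:Z) i j = (i == 2 - 2 * k%:Z)%:R * cz (tt k.+1) j - (i == - (2 * k%:Z))%:R * cz (tt k) j.
Proof.
case: HP => H1 [Hm1 Sk].
suff : forall i j, (P (1 - 2 * k%:Z) i j = (i == 2 - 2 * k%:Z)%:R * cz (tt k.+1) j - (i == - (2 * k%:Z))%:R * cz (tt k) j) /\
  (P (1 - 2 * k.+1%:Z) i j = (i == 2 - 2 * k.+1%:Z)%:R * cz (tt k.+2) j - (i == - (2 * k.+1%:Z))%:R * cz (tt k.+1) j).
  by move=> /(_ i j) [].
elim: k {i j} => [|k IH] i j.
  split.
    have -> : 1 - 2 * (Posz 0) = 1 by [].
    rewrite H1 /lp_one czt0 czt1 mulr0 sub0r mulrN opprK.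
    have -> : (i == - (2 * 0)) = (i == 0) by [].
    by case: (i == 0); case: (j == 0).
  have -> : 1 - 2 * (Posz 1) = -1 by [].
  rewrite Hm1 /lp_one czt1 czt2 mulr0 subr0.
  have -> : (i == 2 - 2 * 1) = (i == 0) by [].
  by case: (i == 0); case: (j == 0).
split; first by case: (IH i j).
have -> : 1 - 2 * k.+2%:Z = (1 - 2 * k%:Z) - 4 by lia.
rewrite (@rec_bwd P Sk).
have -> : 1 - 2 * k%:Z - 2 = 1 - 2 * k.+1%:Z by lia.
case: (IH (i+2) j) => _ ->.
case: (IH (i+2) (j-2)) => _ ->.
case: (IH (i+4) j) => -> _.
have -> : (i + 2 == 2 - 2 * k.+1%:Z) = (i == 2 - 2 * k.+2%:Z) by apply/eqP/eqP; lia.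
have -> : (i + 2 == - (2 * k.+1%:Z)) = (i == - (2 * k.+2%:Z)) by apply/eqP/eqP; lia.
have -> : (i + 4 == 2 - 2 * k%:Z) = (i == 2 - 2 * k.+2%:Z) by apply/eqP/eqP; lia.
have -> : (i + 4 == - (2 * k%:Z)) = (i == - (2 * k.+2%:Z)) by apply/eqP/eqP; lia.
rewrite (ttS k.+1) cz_rec.
rewrite (_ : cz (tt k.+2) j = 2 * cz (tt k.+1) j + cz (tt k.+1) (j-2) - cz (tt k) j); last by rewrite ttS cz_rec.
ring.
Qed.
End Phi.

Lemma eval_form (f : lpoly) A B (qa qb : {poly int}) (N : int) :
  (forall i j, f i j = (i == A)%:R * cz qa j - (i == B)%:R * cz qb j) ->
  lp_eval_z f N (fun i => (i == A)%:R * qa.[N] - (i == B)%:R * qb.[N]).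
Proof.
move=> Hf; exists (size qa + size qb)%N; split.
  move=> i j; rewrite Hf; case: j => [k|k] /=; last by rewrite !mulr0 subr0 eqxx.
  move=> H.
  rewrite lez_nat; case: (leqP (size qa) k) => Ha; case: (leqP (size qb) k) => Hb;
    [| by apply: leq_trans (ltnW Hb) (leq_addl _ _) | by apply: leq_trans (ltnW Ha) (leq_addr _ _)
     | by apply: leq_trans (ltnW Ha) (leq_addr _ _)].
  by move: H; rewrite !nth_default // !mulr0 subr0 eqxx.
move=> i.
rewrite (@horner_coef_wide _ (size qa + size qb).+1 qa); last by lia.
rewrite (@horner_coef_wide _ (size qa + size qb).+1 qb); last by lia.
rewrite !mulr_sumr -sumrB; apply: eq_bigr => k _.
by rewrite Hf /= mulrBl !mulrA.
Qed.

Definition vv (N : int) n : int := (tt n).[N].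
Lemma vvS N n : vv N n.+2 = (N ^+ 2 + 2) * vv N n.+1 - vv N n.
Proof. by rewrite /vv ttS !hornerE. Qed.
Lemma vv1 N : vv N 1 = 0.
Proof. by rewrite /vv tt1 horner0. Qed.
Lemma vv2 N : vv N 2 = 1.
Proof. by rewrite vvS vv1 /vv tt0 hornerN hornerC mulr0 sub0r opprK. Qed.

Lemma period (N : int) (p : nat) : prime p -> exists m : nat, (0 < m)%N /\
  forall l : nat, ((vv N (l * m).+1)%:~R : 'F_p) = 0 /\ ((vv N (l * m).+2)%:~R : 'F_p) = 1.
Proof.
move=> pr.
pose c : 'F_p := (N ^+ 2 + 2)%:~R.
pose sg (x : 'F_p * 'F_p) := (x.2, c * x.2 - x.1).
have inj : injective sg.
  move=> [a b] [a' b'] E.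
  have e1 : b = b' := congr1 fst E.
  have e2 : c * b - a = c * b' - a' := congr1 snd E.
  rewrite e1 in e2 *.
  by have /oppr_inj -> : - a = - a' by apply: (addrI (c * b')).
pose pi := perm inj.
exists #[pi]%g; split; first exact: order_gt0.
pose x0 : 'F_p * 'F_p := ((vv N 0)%:~R, (vv N 1)%:~R).
have Hit : forall n, iter n sg x0 = ((vv N n)%:~R, (vv N n.+1)%:~R).
  elim=> [|n IH] //; rewrite iterS IH /sg /= vvS rmorphB rmorphM /c.
  by [].
move=> l.
have H0 : iter (l * #[pi]%g) sg x0 = x0.
  rewrite -(eq_iter (permE inj)) -permX mulnC expgM expg_order expg1n.
  by rewrite perm1.
have := Hit (l * #[pi]%g).+1.
rewrite iterS H0 /sg /= => [[<- <-]].
have vv0 : vv N 0 = -1 by rewrite /vv tt0 hornerN hornerC.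
by rewrite vv1 vv0 rmorph0 mulr0 sub0r rmorphN rmorph1 opprK.
Qed.

Lemma cong_fin (p : nat) (pr : prime p) (b b' : bool) (x y : int) :
  (x%:~R : 'F_p) = 1 -> (y%:~R : 'F_p) = 0 ->
  ((b%:R * x - b'%:R * y) == b%:R %[mod p%:Z])%Z.
Proof.
move=> hx hy.
rewrite eqz_mod_dvd (dvdz_pcharf (pchar_Fp pr)) !rmorphB !rmorphM /= hx hy mulr0 subr0 mulr1.
by case: b; rewrite ?rmorph1 ?rmorph0 subrr.
Qed.

Theorem mainTheorem4 :
  forall P : int -> lpoly, homfly_T2 P ->
  forall (N p : nat), prime p ->
  exists m : nat, (1 <= m)%N /\
    forall l : nat,
      (exists g, lp_eval_z (P (2 * l * m + 1)%N%:Z) N%:Z g /\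
         forall i : int, (g i == ((i == (2 * l * m)%N%:Z))%:R %[mod p%:Z])%Z) /\
      (exists g, lp_eval_z (P (- (2 * l * m + 1)%N%:Z)) N%:Z g /\
         forall i : int, (g i == ((i == - (2 * l * m)%N%:Z))%:R %[mod p%:Z])%Z).
Proof.
move=> P HP N p pr.
have [m [m0 Hm]] := @period N%:Z p pr.
exists m; split => // l.
have [h1 h2] := Hm l.
split.
  exists (fun i => (i == 2 * (l * m).+1%:Z - 2)%:R * vv N%:Z (l * m).+2 - (i == 2 * (l * m).+1%:Z)%:R * vv N%:Z (l * m).+1).
  split.
    have -> : (2 * l * m + 1)%N%:Z = 2 * (l * m).+1%:Z - 1 by lia.
    by apply: eval_form => i j; exact: phi_fwd.
  move=> i.
  have -> : (i == 2 * (l * m).+1%:Z - 2) = (i == (2 * l * m)%N%:Z) by apply/eqP/eqP; lia.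
  exact: cong_fin.
exists (fun i => (i == 2 - 2 * (l * m).+1%:Z)%:R * vv N%:Z (l * m).+2 - (i == - (2 * (l * m).+1%:Z))%:R * vv N%:Z (l * m).+1).
split.
  have -> : - (2 * l * m + 1)%N%:Z = 1 - 2 * (l * m).+1%:Z by lia.
  by apply: eval_form => i j; exact: phi_bwd.
move=> i.
have -> : (i == 2 - 2 * (l * m).+1%:Z) = (i == - (2 * l * m)%N%:Z) by apply/eqP/eqP; lia.
exact: cong_fin.
Qed.
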